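(* Let $q$ be a prime power and $k\ge 1$ an integer. A simple graph $G$ satisfies $\operatorname{mr}(\mathbb{F}_q,G)\le k$ (i.e. $G\in\mathcal{G}_k(\mathbb{F}_q)$) if and only if $G$ is a blowup of some graph of the form $H\cup K_1$ with $H\in\mathfrak{g}_k(\mathbb{F}_q)$, where $K_1$ denotes a single isolated nonlooped vertex and $\cup$ is disjoint union.
   Context: Graphs may have loops but no multiple edges; a simple graph has no loops. For a field $F$ and a simple graph $G$ on vertices $\{1,\dots,n\}$, $S(F,G)$ is the set of symmetric $n\times n$ matrices $A$ over $F$ with $a_{ij}\neq 0$ for $i\ne j$ iff $ij$ is an edge of $G$ (diagonal entries unrestricted); $\operatorname{mr}(F,G)=\min\{\operatorname{rank}A: A\in S(F,G)\}$ and $\mathcal{G}_k(F)=\{G:\operatorname{mr}(F,G)\le k\}$. For a symmetric $n\times n$ matrix $A$, the looped graph corresponding to $A$, $\Gamma(A)$, has vertex set $\{1,\dots,n\}$, an edge $ij$ ($i\neq j$) iff $a_{ij}\neq0$, and a loop at $i$ iff $a_{ii}\ne 0$. Definition of $\mathfrak{g}_k(\mathbb{F}_q)$: let $x_1,\dots,x_m$ be representatives of the classes of nonzero vectors of $\mathbb{F}_q^k$ under the relation $x\sim cx$ ($c\in\mathbb{F}_q$, $c\neq0$), and let $U=[x_1\ \cdots\ x_m]$ be the $k\times m$ matrix with these columns; $\mathfrak{g}_k(\mathbb{F}_q)$ is the set of isomorphism classes of looped graphs $\Gamma(U^tBU)$ as $B$ ranges over the invertible symmetric $k\times k$ matrices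 over $\mathbb{F}_q$ (equivalently over a set of representatives of congruence classes $B\mapsto C^tBC$, $C$ invertible). A blowup of a looped graph $G$ with vertices $v_1,\dots,v_n$ is a simple graph obtained by replacing each nonlooped vertex $v_i$ by a (possibly empty) independent set $V_i$, each looped vertex $v_i$ by a (possibly empty) clique $V_i$, and each edge $v_iv_j$ ($i\ne j$) by all edges $xy$ with $x\in V_i$, $y\in V_j$. *)

(* Defs.v *)
From HB Require Import structures.
From mathcomp Require Import all_boot all_order all_algebra all_fingroup all_field.
Set Implicit Arguments. Unset Strict Implicit. Unset Printing Implicit Defensive.
Import GRing.Theory.
Local Open Scope ring_scope.

(* A simple graph on 'I_n is a symmetric irreflexive relation (hypotheses
   stated in the theorem).  S(F,G): symmetric matrices whose off-diagonal
   nonzero pattern is the edge set of G. *)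
Definition inS (F : fieldType) (n : nat) (G : rel 'I_n) (A : 'M[F]_n) : bool :=
  (A^T == A) && [forall i, forall j, (i != j) ==> ((A i j != 0) == G i j)].

(* mr(F,G) = min rank over S(F,G) (over a finite field the matrices form a
   finite type; S(F,G) is never empty, so the default n is never used). *)
Definition mr (F : finFieldType) (n : nat) (G : rel 'I_n) : nat :=
  \big[minn/n]_(A : 'M[F]_n | inS G A) \rank A.

(* A looped graph on a finite vertex type V is a symmetric relation L;
   L v v means v carries a loop.  Gamma A: edge ij iff a_ij != 0, loop at i
   iff a_ii != 0. *)
Definition Gamma (F : fieldType) (p : nat) (A : 'M[F]_p) : rel 'I_p :=
  fun i j => A i j != 0.

Definition addK1 (V : Type) (L : rel V) : rel (option V) :=
  fun x y => match x, y with Some a, Some b => L a b | _, _ => false end.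

(* G (simple, on 'I_n) is a blowup of the looped graph L: each vertex x of G
   lies in the part V_(f x); distinct vertices x, y are adjacent iff
   f x, f y are adjacent in L (loops give cliques, nonloops independent sets,
   parts may be empty). *)
Definition is_blowup (n : nat) (G : rel 'I_n) (V : finType) (L : rel V) : Prop :=
  exists f : 'I_n -> V, forall x y : 'I_n, x != y -> G x y = L (f x) (f y).

(* U : k x m has as columns a set of representatives of the nonzero vectors
   of F^k modulo nonzero scalars. *)
Definition proj_reps (F : fieldType) (k m : nat) (U : 'M[F]_(k, m)) : Prop :=
  [/\ forall j, col j U != 0,
      forall j j' (c : F), j != j' -> col j U != c *: col j' U
    & forall x : 'cV[F]_k, x != 0 -> exists j (c : F), x = c *: col j U].

(* Main.v *)
Require Import Defs.
From mathcomp Require Import all_boot all_order all_algebra all_fingroup all_field.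
Set Implicit Arguments. Unset Strict Implicit. Unset Printing Implicit Defensive.
Import GRing.Theory.
Local Open Scope ring_scope.

Section Dec.
Variable F : fieldType.

Definition Pdec n (A : 'M[F]_n) (s : nat) : Prop :=
  exists (Y : 'M[F]_(s, n)) (B : 'M[F]_s),
    [/\ B^T = B, B \in unitmx & A = Y^T *m B *m Y].

Lemma dec_base n (A : 'M[F]_n) : A^T = A -> Pdec A (\rank A).
Proof.
move=> As.
set W := row_base A; set W' := pinvmx W.
have WW' : W *m W' = 1%:M by apply: mulmxVp; apply: row_base_free.
have AW : A = A *m W' *m W by rewrite mulmxKpV // eq_row_base submx_refl.
have AW2 : A = W^T *m W'^T *m A.
  by rewrite -{1}As {1}AW !trmx_mul As mulmxA.
clearbody W W'.
set C := W'^T *m A *m W'.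
have AC : A = W^T *m C *m W.
  have e : W'^T *m A *m W' *m W = W'^T *m A.
    by rewrite -[W'^T *m A *m W']mulmxA -mulmxA -AW.
  apply: (etrans AW2); by rewrite -[W^T *m C *m W]mulmxA /C e mulmxA.
exists W, C; split.
- by rewrite /C !trmx_mul trmxK As mulmxA.
- rewrite -row_free_unit /row_free eqn_leq rank_leq_row /=.
  apply: (leq_trans _ (mxrankM_maxr W^T C)).
  have := mxrankM_maxl (W^T *m C) W; by rewrite -AC.
- exact: AC.
Qed.

Lemma dec_step n (A : 'M[F]_n) s : Pdec A s -> Pdec A s.+1.
Proof.
case=> Y [B [Bs Bu ->]].
exists (col_mx (0 : 'M_(1, n)) Y : 'M_(1 + s, n)), (block_mx (1%:M : 'M_1) 0 0 B : 'M_(1 + s)); split.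
- have := tr_block_mx (1%:M : 'M[F]_1) 0 0 B; rewrite Bs !trmx0 trmx1; exact.
- have := det_ublock (1%:M : 'M[F]_1) 0 B; rewrite det1 mul1r => e.
  by rewrite unitmxE e -unitmxE.
- have := tr_col_mx (0 : 'M[F]_(1, n)) Y; rewrite trmx0 => ->.
  have e : (row_mx (0 : 'M[F]_(n, 1)) Y^T) *m (block_mx (1%:M : 'M[F]_1) 0 0 B)
          *m (col_mx (0 : 'M[F]_(1, n)) Y) = Y^T *m B *m Y.
    rewrite mul_row_block mul_row_col.
    by rewrite !mulmx0 !add0r.
  exact: (esym e).
Qed.

Lemma dec_all n (A : 'M[F]_n) s : A^T = A -> (\rank A <= s)%N -> Pdec A s.
Proof.
move=> As; elim: s => [|s IH].
  by rewrite leqn0 => /eqP <-; apply: dec_base.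
rewrite leq_eqVlt => /orP [/eqP <-|]; first exact: dec_base.
by rewrite ltnS => /IH; apply: dec_step.
Qed.
End Dec.

Definition qf (F : fieldType) k (B : 'M[F]_k) (u v : 'I_k -> F) : F :=
  \sum_l \sum_i u i * B i l * v l.

Lemma qfE (F : fieldType) k n p (Y : 'M[F]_(k, n)) (Z : 'M[F]_(k, p)) B x y :
  (Y^T *m B *m Z) x y = qf B (fun i => Y i x) (fun l => Z l y).
Proof.
rewrite mxE /qf; apply: eq_bigr => l _; rewrite mxE big_distrl.
by apply: eq_bigr => i _; rewrite !mxE.
Qed.

Lemma qfZ (F : fieldType) k (B : 'M[F]_k) u v c d :
  qf B (fun i => c * u i) (fun l => d * v l) = c * d * qf B u v.
Proof.
rewrite /qf mulr_sumr; apply: eq_bigr => l _; rewrite mulr_sumr.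
apply: eq_bigr => i _.
rewrite [d * v l]mulrC !mulrA -[c * d * u i]mulrA [d * u i]mulrC !mulrA.
by rewrite -!mulrA; congr (_ * (_ * _)); rewrite mulrA mulrC.
Qed.

Lemma qf0l (F : fieldType) k (B : 'M[F]_k) v :
  qf B (fun _ => 0) v = 0.
Proof. by rewrite /qf big1 // => l _; rewrite big1 // => i _; rewrite !mul0r. Qed.

Lemma qf0r (F : fieldType) k (B : 'M[F]_k) u :
  qf B u (fun _ => 0) = 0.
Proof. by rewrite /qf big1 // => l _; rewrite big1 // => i _; rewrite !mulr0. Qed.

Lemma eq_qf (F : fieldType) k (B : 'M[F]_k) u u' v v' :
  u =1 u' -> v =1 v' -> qf B u v = qf B u' v'.
Proof.
move=> eu ev; rewrite /qf; apply: eq_bigr => l _; apply: eq_bigr => i _.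
by rewrite eu ev.
Qed.

Lemma bigmin_le (T : eqType) (s : seq T) (P : pred T) (f : T -> nat) idx x :
  x \in s -> P x -> (\big[minn/idx]_(i <- s | P i) f i <= f x)%N.
Proof.
elim: s => [//|a s IH]; rewrite inE big_cons => /orP [/eqP <-|xs] Px.
  by rewrite Px geq_minl.
case: (P a); last exact: IH.
by apply: leq_trans (geq_minr _ _) _; apply: IH.
Qed.

Unset Implicit Arguments.

Theorem mainTheorem1 (F : finFieldType) (k m n : nat) (U : 'M[F]_(k, m))
    (hU : proj_reps U) (G : rel 'I_n)
    (Gsym : symmetric G) (Girr : irreflexive G) :
  (1 <= k)%N ->
  ((mr F G <= k)%N <->
   exists B : 'M[F]_k,
     [/\ B^T = B, B \in unitmx & is_blowup G (addK1 (Gamma (U^T *m B *m U)))]).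
Proof.
move=> k1; split.
- move=> hmr.
  have [A /andP [SA rA]] : exists A : 'M[F]_n, inS G A && (\rank A <= k)%N.
    case: (boolP [exists X : 'M[F]_n, inS G X && (\rank X <= k)%N]) => [/existsP //|].
    rewrite negb_exists => /forallP nex; exfalso.
    pose Adj : 'M[F]_n := \matrix_(i, j) (G i j)%:R.
    have SAdj : inS G Adj.
      apply/andP; split.
        by apply/eqP/matrixP => i j; rewrite !mxE Gsym.
      apply/forallP => x; apply/forallP => y; apply/implyP => _.
      by rewrite mxE; case: (G x y); rewrite ?oner_eq0 ?eqxx.
    have [nk|kn] := leqP n k.
      move: (nex Adj); rewrite SAdj /=.
      by rewrite (leq_trans (rank_leq_row Adj) nk).
    move: hmr; apply/negP; rewrite -ltnNge /mr.
    apply: (big_ind (fun v => k < v)%N) => //.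
      by move=> a b ha hb; rewrite leq_min ha hb.
    move=> X SX; rewrite ltnNge; apply/negP => rX.
    by move: (nex X); rewrite SX rX.
  have /andP [/eqP As SAo] := SA.
  have [Y [B [Bs Bu AE]]] := dec_all As rA.
  pose f (x : 'I_n) : option 'I_m :=
    if col x Y == 0 then None else [pick j | [exists c : F, col x Y == c *: col j U]].
  have fx : forall x, (f x = None /\ (forall i, Y i x = 0)) \/
      exists j c, [/\ f x = Some j, c != 0 & forall i, Y i x = c * U i j].
    move=> x; rewrite /f; case: eqP => [Y0|Yn].
      left; split=> // i; have := congr1 (fun M : 'M[F]_(k, 1) => M i 0) Y0; by rewrite !mxE.
    right; case: pickP => [j /existsP [c /eqP e] | none].
      exists j, c; split => //.
        by apply/eqP => c0; apply: Yn; rewrite e c0 scale0r.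
      by move=> i; have := congr1 (fun M : 'M[F]_(k, 1) => M i 0) e; rewrite !mxE.
    exfalso; case: hU => _ _ h3.
    have [j [c e]] := h3 (col x Y) (introN eqP Yn).
    by move: (none j) => /existsP; apply; exists c; rewrite e.
  exists B; split => //; exists f => x y xy.
  have := SAo; move=> /forallP /(_ x) /forallP /(_ y) /implyP /(_ xy) /eqP <-.
  rewrite AE qfE /addK1 /Gamma.
  case: (fx x) => [[-> Y0]|[a [c [-> c0 Ya]]]].
    by rewrite (eq_qf B Y0 (fun l => erefl)) qf0l eqxx.
  case: (fx y) => [[-> Y0]|[b [d [-> d0 Yb]]]].
    by rewrite (eq_qf B (fun l => erefl) Y0) qf0r eqxx.
  rewrite (eq_qf B Ya Yb) qfZ qfE.
  by rewrite !mulf_eq0 negb_or negb_or c0 d0.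
- case=> B [Bs Bu [f Hf]].
  pose Y : 'M[F]_(k, n) :=
    \matrix_(i, x) (if f x is Some j then U i j else 0).
  pose A := Y^T *m B *m Y.
  have SA : inS G A.
    apply/andP; split.
      by rewrite /A !trmx_mul trmxK Bs mulmxA.
    apply/forallP => x; apply/forallP => y; apply/implyP => xy.
    have colY : forall z i, Y i z = if f z is Some j then U i j else 0.
      by move=> z i; rewrite mxE.
    rewrite Hf // /A qfE /addK1 /Gamma (eq_qf B (colY x) (colY y)).
    case: (f x) => [a|]; last by rewrite qf0l eqxx.
    case: (f y) => [b|]; last by rewrite qf0r eqxx.
    by rewrite qfE.
  rewrite /mr. have := bigmin_le (fun X => \rank X) n (mem_index_enum A) SA.
  move=> h; apply: leq_trans h _.
  exact: leq_trans (mxrankM_maxr (Y^T *m B) Y) (rank_leq_row Y).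
Qed.
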